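(* Let $G$ be a fullerene graph, $C$ a longest cycle of $G$, and apply the discharging procedure described in the context. If $f=v_1v_2v_3v_4v_5v_6$ is a white face of $G$ such that the edges $v_2v_3$ and $v_5v_6$ are contained in $C$, then the final amount of charge of $f$ is $1$ unit.
   Context: A fullerene graph is a cubic, planar, $3$-connected graph embedded in the plane in which every face has size five or six. Fix a longest cycle $C$ of $G$; vertices on $C$ are black, the others white. Every face of $G$ is incident with at most two white vertices. A face incident with exactly two white vertices is called white; a face incident with no white vertex is called black. For a face $f$ with vertices $v_1,\dots,v_k$ in cyclic order, $f_{i,i+1}$ denotes the face other than $f$ containing the edge $v_iv_{i+1}$ (indices modulo $k$). Discharging: each white vertex receives $3$ units of charge and sends $1$ unit to each of its three incident faces (so each face initially has charge equal to its number of incident white vertices). Then charge is redistributed by two rules, where $f_0=v_1\dots v_6$ is a black face of size six and indices are modulo $6$. Rule A: $f_0$ receives $1/2$ unit from $f_{i,i+1}$ if the path $v_{i-1}v_iv_{i+1}v_{i+2}$ is contained in $C$ and the face $f_{i,i+1}$ is white. Rule B: $f_0$ receives $1$ unit from $f_{i,i+1}$ if the edge $v_iv_{i+1}$ is contained in $C$, neither $v_{i-1}v_i$ nor $v_{i+1}v_{i+2}$ is contained in $C$, and the face $f_{i,i+1}$ is white. The final charge of a face is its initial charge plus all charge received minus all charge sent under Rules A and B. *)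

(* Defs.v *)
(* A fullerene graph is encoded as a plane (genus 0)
   combinatorial map: darts D, vertices V, tail : D -> V, an edge involution
   e, and a vertex rotation n (a permutation whose orbits are exactly the
   fibres of tail).  Faces are the orbits of fphi := n \o e. *)
From mathcomp Require Import all_boot all_order all_algebra.
Set Implicit Arguments.
Unset Strict Implicit.
Unset Printing Implicit Defensive.
Import GRing.Theory Num.Theory.
Local Open Scope ring_scope.

Section Fullerene.
Variables (V D : finType) (tail : D -> V) (e n : D -> D).

Definition fphi (x : D) : D := n (e x).

Definition adj : rel V :=
  fun u v => [exists x, (tail x == u) && (tail (e x) == v)].

Definition adj_avoid (S : {set V}) : rel V :=
  fun u v => [&& adj u v, u \notin S & v \notin S].

Definition three_connected : Prop :=
  (3 < #|V|)%N /\
  forall S : {set V}, (#|S| <= 2)%N ->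
    forall u v, u \notin S -> v \notin S -> connect (adj_avoid S) u v.

Definition fullerene : Prop :=
  (forall x, e (e x) = x) /\ (forall x, e x != x) /\
  injective n /\
  (forall x y, (tail x == tail y) = fconnect n x y) /\
  (forall v, exists x, tail x = v) /\
  (* simple graph: no loops, no multiple edges *)
  (forall x, tail (e x) != tail x) /\
  (forall x y, tail x = tail y -> tail (e x) = tail (e y) -> x = y) /\
  (forall x, order n x = 3%N) /\
  (forall x, (order fphi x == 5%N) || (order fphi x == 6%N)) /\
  (* planar (genus 0): Euler's formula V - E + F = 2, with E = #|D|/2 *)
  (2 * (#|V| + fcard fphi (predT : pred D)) = #|D| + 4)%N /\
  three_connected.

Definition is_gcycle (c : seq V) : bool :=
  [&& uniq c, (2 < size c)%N & cycle adj c].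

Definition longest_cycle (C : seq V) : Prop :=
  is_gcycle C /\ forall c, is_gcycle c -> (size c <= size C)%N.

Variable C : seq V.

Definition white (v : V) : bool := v \notin C.

Definition nwhite (x : D) : nat :=
  #|[set v : V | white v & [exists y, fconnect fphi x y && (tail y == v)]]|.

Definition white_face (x : D) : bool := nwhite x == 2%N.
Definition black_face (x : D) : bool := nwhite x == 0%N.

Definition cedge (u v : V) : bool :=
  [&& u \in C, v \in C & (next C u == v) || (next C v == u)].

Definition dart_in_C (x : D) : bool := cedge (tail x) (tail (e x)).

(* Charge received by the (black hexagonal) face of dart x from the face on
   the other side of the edge of x.  With x = v_i v_{i+1}, finv fphi x is
   v_{i-1} v_i and fphi x is v_{i+1} v_{i+2}. *)
Definition ruleA (x : D) : rat :=
  if [&& black_face x, order fphi x == 6%N, white_face (e x),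
         dart_in_C (finv fphi x), dart_in_C x & dart_in_C (fphi x)]
  then 1 / 2 else 0.

Definition ruleB (x : D) : rat :=
  if [&& black_face x, order fphi x == 6%N, white_face (e x),
         dart_in_C x, ~~ dart_in_C (finv fphi x) & ~~ dart_in_C (fphi x)]
  then 1 else 0.

Definition transfer (x : D) : rat := ruleA x + ruleB x.

(* final charge of the face of x: initial charge (number of incident white
   vertices), plus everything received across its edges, minus everything
   sent across its edges *)
Definition final_charge (x : D) : rat :=
  (nwhite x)%:R + \sum_(y | fconnect fphi x y) (transfer y - transfer (e y)).

End Fullerene.

(* Main.v *)
Require Import Defs.
From mathcomp Require Import all_boot all_order all_algebra.
From mathcomp Require Import zify.
Set Implicit Arguments.
Unset Strict Implicit.
Unset Printing Implicit Defensive.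

Section Basics.
Variables (V D : finType) (tail : D -> V) (e n : D -> D).
Hypothesis F : fullerene tail e n.

Local Notation fp := (fphi e n).
Local Notation hd x := (tail (e x)).

Let F' := F.
Ltac dF := have [h1 [h2 [h3 [h4 [h5 [h6 [h7 [h8 [h9 [h10 h11]]]]]]]]]] := F'.
Lemma eK x : e (e x) = x. Proof. by dF. Qed.
Lemma n_inj : injective n. Proof. by dF. Qed.
Lemma tail_conn x y : (tail x == tail y) = fconnect n x y.
Proof. by dF. Qed.
Lemma tailn x : tail (n x) = tail x.
Proof. by apply/esym/eqP; rewrite tail_conn fconnect1. Qed.
Lemma noloop x : hd x != tail x. Proof. by dF. Qed.
Lemma simple x y : tail x = tail y -> hd x = hd y -> x = y.
Proof. by dF; apply: h7. Qed.
Lemma order_n x : order n x = 3. Proof. by dF. Qed.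
Lemma order_fp x : (order fp x == 5) || (order fp x == 6).
Proof. by dF; apply: h9. Qed.

Lemma orbit_n x : orbit n x = [:: x; n x; n (n x)].
Proof. by rewrite /orbit order_n. Qed.
Lemma n3 x : n (n (n x)) = x.
Proof. by have := iter_order n_inj x; rewrite order_n. Qed.
Lemma n_uniq x : [&& x != n x, x != n (n x) & n x != n (n x)].
Proof. by have := orbit_uniq n x; rewrite orbit_n /= !inE !negb_or andbT -!andbA. Qed.
Lemma darts_at x y : tail y = tail x -> [\/ y = x, y = n x | y = n (n x)].
Proof.
move=> /eqP; rewrite eq_sym tail_conn fconnect_orbit orbit_n !inE.
by case/or3P=> /eqP ->; [apply: Or31|apply: Or32|apply: Or33].
Qed.
Lemma tail_fp y : tail (fp y) = hd y. Proof. by rewrite /fphi tailn. Qed.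
Lemma fp_inj : injective fp.
Proof. move=> x y /n_inj h; by rewrite -(eK x) h eK. Qed.
Lemma hd_n x : hd (n x) != hd x.
Proof. apply/negP=> /eqP h; have := simple (tailn x) h. 
by case/and3P: (n_uniq x) => /eqP ? _ _ ?; auto. Qed.
Lemma hd_fp_tail y : hd (fp y) != tail y.
Proof. by rewrite /fphi -{2}(eK y); apply: hd_n. Qed.

Lemma adj_sym u v : adj tail e u v = adj tail e v u.
Proof.
by apply/existsP/existsP=> [] [x /andP[/eqP<- /eqP<-]]; exists (e x); rewrite eK !eqxx.
Qed.
Lemma adjP u v : reflect (exists x, tail x = u /\ hd x = v) (adj tail e u v).
Proof.
apply: (iffP existsP) => [[x /andP[/eqP ? /eqP ?]]|[x [? ?]]]; exists x => //.
by apply/andP; split; apply/eqP.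
Qed.
Lemma adjD x : adj tail e (tail x) (hd x).
Proof. by apply/adjP; exists x. Qed.

Lemma nbr3 z u : adj tail e (tail z) u -> [\/ u = hd z, u = hd (n z) | u = hd (n (n z))].
Proof.
case/adjP=> x [tx <-]; case: (darts_at tx) => ->; by [apply: Or31|apply: Or32|apply: Or33].
Qed.

Lemma deg3 v a b c u : adj tail e v a -> adj tail e v b -> adj tail e v c ->
  adj tail e v u -> a != b -> a != c -> b != c -> [\/ u = a, u = b | u = c].
Proof.
move=> Ha; case/adjP: (Ha) => z [tz _]; rewrite -tz {tz} in Ha *.
move=> Hb Hc Hu.
case: (nbr3 Ha) => ->; case: (nbr3 Hb) => ->; case: (nbr3 Hc) => ->;
case: (nbr3 Hu) => -> ; rewrite ?eqxx //; by [ move=> *; apply: Or31 | move=> *; apply: Or32 | move=> *; apply: Or33].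
Qed.
End Basics.

Lemma prev_head (T : eqType) (z : T) s : uniq (z :: s) -> prev (z :: s) z = last z s.
Proof.
move=> U; rewrite prev_nth mem_head /=.
case/andP: U => zs _; rewrite memNindex //.
by rewrite (last_nth z).
Qed.

Lemma next_head (T : eqType) (z y : T) s : next (z :: y :: s) z = y.
Proof. by rewrite /= eqxx. Qed.

Lemma next_mid (T : eqType) (s1 s2 : seq T) x y :
  uniq (s1 ++ x :: y :: s2) -> next (s1 ++ x :: y :: s2) x = y.
Proof.
move=> U; have xs : x \notin s1.
  by move: U; rewrite cat_uniq => /and3P[_ /hasPn H _]; apply: H; rewrite mem_head.
rewrite next_nth mem_cat mem_head orbT.
case: s1 U xs => [|z s1] U xs /=; first by rewrite eqxx.
rewrite inE negb_or eq_sym in xs; case/andP: xs => /negbTE -> xs.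
by rewrite index_cat (negbTE xs) /= eqxx addn0 nth_cat ltnNge leqnSn /= subSnn.
Qed.

Lemma next_last (T : eqType) (z : T) s : uniq (z :: s) -> next (z :: s) (last z s) = z.
Proof.
move=> U; have := next_prev U z; by rewrite prev_head.
Qed.

Section Cyc.
Variables (V D : finType) (tail : D -> V) (e n : D -> D) (C : seq V).
Hypothesis F : fullerene tail e n.
Hypothesis L : longest_cycle tail e C.
Local Notation adj := (adj tail e).

Lemma Cuniq : uniq C. Proof. by case: L => /and3P[]. Qed.
Lemma Csize : 2 < size C. Proof. by case: L => /and3P[]. Qed.
Lemma Ccyc : cycle adj C. Proof. by case: L => /and3P[]. Qed.
Lemma longer s : uniq s -> cycle adj s -> size C < size s -> False.
Proof.
move=> U c lt; case: L => _ /(_ s); rewrite /is_gcycle U c /=.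
have := Csize; case: (ltnP 2 (size s)) => h /= cs; last by have := leq_trans (leq_ltn_trans (ltnW cs) lt) h.
by move/(_ isT); rewrite leqNgt lt.
Qed.

Lemma adj_next x : x \in C -> adj x (next C x).
Proof. by move=> xC; apply: next_cycle Ccyc xC. Qed.
Lemma adj_prev x : x \in C -> adj x (prev C x).
Proof. by move=> xC; rewrite (adj_sym F); apply: prev_cycle Ccyc xC. Qed.

Lemma next_neq_prev x : x \in C -> next C x != prev C x.
Proof.
move=> xC; case: (rot_to xC) => i s R.
have U : uniq (x :: s) by rewrite -R rot_uniq Cuniq.
have sz : 2 < size (x :: s) by rewrite -R size_rot Csize.
rewrite -(next_rot i Cuniq) -(prev_rot i Cuniq) R prev_head //; clear R.
case: s U sz => [|y [|y' s]] //= U _; rewrite eqxx.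
apply/negP => /eqP yl; case/and4P: U => _ /negP yn _ _; apply: yn.
by rewrite yl mem_last.
Qed.

Lemma next_neq x : x \in C -> next C x != x.
Proof.
move=> xC; case: (rot_to xC) => i s R.
have U : uniq (x :: s) by rewrite -R rot_uniq Cuniq.
have sz : 2 < size (x :: s) by rewrite -R size_rot Csize.
rewrite -(next_rot i Cuniq) R; clear R.
case: s U sz => [|y s] //= U _; rewrite eqxx.
by apply/negP => /eqP yx; case/andP: U; rewrite yx mem_head.
Qed.

Lemma prev_neq x : x \in C -> prev C x != x.
Proof.
move=> xC; apply/negP=> /eqP h; have := next_neq (x := prev C x).
by rewrite mem_prev xC (next_prev Cuniq) h eqxx => /(_ isT).
Qed.

(* inserting a white vertex between consecutive cycle vertices *)
Lemma Xlemma x y : x \notin C -> y \in C -> adj x y -> adj x (next C y) -> False.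
Proof.
move=> xC yC a1 a2; have zC : next C y \in C by rewrite mem_next.
case: (rot_to zC) => i s R.
have U : uniq (next C y :: s) by rewrite -R rot_uniq Cuniq.
have cyc : cycle adj (next C y :: s) by rewrite -R rot_cycle Ccyc.
have ly : last (next C y) s = y.
  by rewrite -prev_head // -R (prev_rot i Cuniq) (prev_next Cuniq).
apply: (@longer (x :: next C y :: s)).
- by rewrite cons_uniq U andbT -R mem_rot.
  move: cyc; rewrite /cycle /= !rcons_path ly a2 /= => /andP[-> _].
  by rewrite (adj_sym F).
- by rewrite /= -(size_rot i) R.
Qed.
End Cyc.

Ltac permtac := apply/permP => ?; rewrite /= !count_cat /= !count_cat /= ?count_cat /=;
  repeat match goal with |- context [nat_of_bool ?t] => generalize (nat_of_bool t); intro end;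
  repeat match goal with H : _ |- _ => clear H end; lia.


Section Reroute.
Variables (V D : finType) (tail : D -> V) (e n : D -> D) (C : seq V).
Hypothesis F : fullerene tail e n.
Hypothesis L : longest_cycle tail e C.
Local Notation adj := (adj tail e).

Lemma newcyc R s W X : uniq R -> size R = size C -> uniq W ->
  all (fun z => z \notin R) W ->
  perm_eq (W ++ R) (X ++ s) -> size X < size W -> cycle adj s -> False.
Proof.
move=> RU Rs WU WR pe sz cs; apply: (longer L (s := s)) => //.
  have : uniq (X ++ s) by rewrite -(perm_uniq pe) cat_uniq RU WU andbT; apply/hasPn=> z zR; apply/negP => zW; by have := allP WR z zW; rewrite zR.
  by rewrite cat_uniq => /and3P[].
have := perm_size pe; rewrite !size_cat -Rs; lia.
Qed.

Lemma adjS u v : adj u v -> adj v u. Proof. by rewrite (adj_sym F). Qed.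
Ltac closeadj := repeat (apply/andP; split); try done; try (apply: adjS; done).

Variables (v1 v2 v3 v4 v5 v6 w2 w3 : V) (P1 B1 : seq V).
Let R := v2 :: v3 :: w3 :: P1 ++ v5 :: v6 :: B1 ++ [:: w2].
Hypotheses (RU : uniq R) (Rc : cycle adj R) (Rs : size R = size C)
  (Rm : forall z, (z \in R) = (z \in C)).
Hypotheses (v1C : v1 \notin C) (v4C : v4 \notin C) (v14 : v1 != v4).
Hypotheses (a12 : adj v1 v2) (a61 : adj v6 v1) (a34 : adj v3 v4) (a45 : adj v4 v5).

Lemma Rpieces : [/\ path adj w3 (P1 ++ [:: v5]), path adj v6 (B1 ++ [:: w2]),
   adj v2 v3, adj v3 w3 & adj v5 v6 /\ adj w2 v2].
Proof.
move: Rc; rewrite /cycle /= rcons_cat /= cat_path /=.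
case/and5P => -> -> p1 l1 /andP[-> p2].
rewrite cats1 rcons_path p1 l1; move: p2; rewrite rcons_cat cat_path /=.
by case/and3P => p2 l2 /andP[-> _]; rewrite cats1 rcons_path p2 l2.
Qed.

Lemma allW (W : seq V) : all (fun z => z \notin C) W -> all (fun z => z \notin R) W.
Proof. by move=> /allP H; apply/allP => z /H; rewrite Rm. Qed.

Lemma HWW a b : a \notin C -> b \notin C -> uniq [:: b; a; v4; v1] ->
  adj w2 b -> adj b a -> adj a w3 -> False.
Proof.
move=> aC bC U wb ba aw; have [pP pB a23 a3w [a56 a22]] := Rpieces.
apply: (@newcyc R (v6 :: (B1 ++ [:: w2]) ++ (b :: a :: w3 :: P1 ++ [:: v5]) ++ [:: v4; v3; v2; v1])
   [:: b; a; v4; v1] [::]) => //.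
- by apply: allW; rewrite /= aC bC v4C v1C.
- by permtac.
- move: pB pP; rewrite /cycle /= -!cats1 -!catA /= !cat_path /= -!catA /= !cat_path /=.
  by move=> /and3P[h1 h2 _] /and3P[h3 h4 _]; closeadj.
Qed.

Lemma PW a : a \notin C -> uniq [:: a; v4; v1] -> adj w2 a -> adj a w3 -> False.
Proof.
move=> aC U wa aw; have [pP pB a23 a3w [a56 a22]] := Rpieces.
apply: (@newcyc R (v6 :: (B1 ++ [:: w2]) ++ (a :: w3 :: P1 ++ [:: v5]) ++ [:: v4; v3; v2; v1])
   [:: a; v4; v1] [::]) => //.
- by apply: allW; rewrite /= aC v4C v1C.
- by permtac.
- move: pB pP; rewrite /cycle /= -!cats1 -!catA /= !cat_path /= -!catA /= !cat_path /=.
  by move=> /and3P[h1 h2 _] /and3P[h3 h4 _]; closeadj.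
Qed.

Lemma PS a P' : P1 ++ [:: v5] = a :: P' -> adj w2 a -> False.
Proof.
move=> E wa; have [pP pB a23 a3w [a56 a22]] := Rpieces.
have la : last a P' = v5 by rewrite -[last a P']/(last w3 (a :: P')) -E last_cat.
apply: (@newcyc R (v6 :: (B1 ++ [:: w2]) ++ (a :: P') ++ [:: v4; v3; v2; v1])
   [:: v4; v1] [:: w3]) => //.
- by rewrite /= inE eq_sym v14.
- by apply: allW; rewrite /= v4C v1C.
- by rewrite -E; permtac.
- move: pB pP; rewrite E /cycle /= -!cats1 -!catA /= !cat_path /= -!catA /= !cat_path /= la.
  by move=> /and3P[h1 h2 _] /andP[h3 h4]; closeadj.
Qed.

Lemma PP a : last v6 B1 = a -> adj a w3 -> False.
Proof.
move=> E aw; have [pP pB a23 a3w [a56 a22]] := Rpieces.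
apply: (@newcyc R (v6 :: B1 ++ (w3 :: P1 ++ [:: v5]) ++ [:: v4; v3; v2; v1])
   [:: v4; v1] [:: w2]) => //.
- by rewrite /= inE eq_sym v14.
- by apply: allW; rewrite /= v4C v1C.
- by permtac.
- move: pB pP; rewrite /cycle /= -!cats1 -!catA /= !cat_path /= -!catA /= !cat_path /= E.
  by move=> /and3P[h1 h2 _] /and3P[h3 h4 _]; closeadj.
Qed.

Lemma HBW a b : last v6 B1 = b -> a \notin C -> uniq [:: a; v4; v1] ->
  adj b a -> adj a w3 -> False.
Proof.
move=> E aC U ba aw; have [pP pB a23 a3w [a56 a22]] := Rpieces.
apply: (@newcyc R (v6 :: B1 ++ (a :: w3 :: P1 ++ [:: v5]) ++ [:: v4; v3; v2; v1])
   [:: a; v4; v1] [:: w2]) => //.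
- by apply: allW; rewrite /= aC v4C v1C.
- by permtac.
- move: pB pP; rewrite /cycle /= -!cats1 -!catA /= !cat_path /= -!catA /= !cat_path /= E.
  by move=> /and3P[h1 h2 _] /and3P[h3 h4 _]; closeadj.
Qed.

Lemma HWB a b P' : P1 ++ [:: v5] = a :: P' -> b \notin C -> uniq [:: b; v4; v1] ->
  adj w2 b -> adj b a -> False.
Proof.
move=> E bC U wb ba; have [pP pB a23 a3w [a56 a22]] := Rpieces.
have la : last a P' = v5 by rewrite -[last a P']/(last w3 (a :: P')) -E last_cat.
apply: (@newcyc R (v6 :: (B1 ++ [:: w2]) ++ (b :: a :: P') ++ [:: v4; v3; v2; v1])
   [:: b; v4; v1] [:: w3]) => //.
- by apply: allW; rewrite /= bC v4C v1C.
- by rewrite -E; permtac.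
- move: pB pP; rewrite E /cycle /= -!cats1 -!catA /= !cat_path /= -!catA /= !cat_path /= la.
  by move=> /and3P[h1 h2 _] /andP[h3 h4]; closeadj.
Qed.
End Reroute.

Section Orient.
Variables (V D : finType) (tail : D -> V) (e n : D -> D) (C : seq V).
Hypothesis F : fullerene tail e n.
Hypothesis L : longest_cycle tail e C.
Local Notation adj := (adj tail e).

Lemma revpath x p y : path adj x (rcons p y) -> path adj y (rcons (rev p) x).
Proof.
have := rev_path adj x (rcons p y); rewrite last_rcons belast_rcons rev_cons => ->.
by apply: sub_path => a b; rewrite (adj_sym F).
Qed.

Variables (v1 v2 v3 v4 v5 v6 : V) (A B : seq V).
Let R := v2 :: v3 :: A ++ v6 :: v5 :: B.
Hypotheses (RU : uniq R) (Rc : cycle adj R) (Rs : size R = size C)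
  (Rm : forall z, (z \in R) = (z \in C)).
Hypotheses (v1C : v1 \notin C) (v4C : v4 \notin C) (v14 : v1 != v4).
Hypotheses (a12 : adj v1 v2) (a61 : adj v6 v1) (a34 : adj v3 v4) (a45 : adj v4 v5).

Lemma orient : False.
Proof.
have adjS u v : adj u v -> adj v u by rewrite (adj_sym F).
move: Rc; rewrite /cycle /= rcons_cat cat_path /= => /and3P[a23 pA /andP[a65 pB]].
have pA' : path adj v3 (rcons A v6) by rewrite rcons_path pA.
have := revpath pA' => pA2.
apply: (@newcyc _ _ _ _ C L R (v2 :: v1 :: v6 :: rev A ++ v3 :: v4 :: v5 :: B)
   [:: v1; v4] [::]) => //.
- by rewrite /= inE v14.
- by rewrite /= !Rm v1C v4C.
- apply/permP => ?; rewrite /= !count_cat /= count_rev /=;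
  repeat match goal with |- context [nat_of_bool ?t] => generalize (nat_of_bool t); intro end;
  repeat match goal with H : _ |- _ => clear H end; lia.
- rewrite /cycle /= rcons_cat cat_path /= adjS //=.
  move: pA2; rewrite rcons_path => /andP[h1 h2].
  by case/andP: pB => _ h3; rewrite adjS // h1 h2 a34 a45 h3.
Qed.
End Orient.

Lemma next_split (T : eqType) (s : seq T) x : uniq s -> x \in s ->
  (exists p q, s = p ++ x :: next s x :: q) \/ (exists p, s = rcons p x /\ next s x = head x s).
Proof.
move=> U xs; case/splitPr: xs U => p q U.
case: q U => [|y q] U.
  right; exists p; split; first by rewrite cats1.
  have -> : p ++ [:: x] = rcons p x by rewrite cats1.
  case: p {U} (U) => [|z p] U; first by rewrite /= eqxx.
  rewrite rcons_cons /=; have U' : uniq (z :: rcons p x) by rewrite -rcons_cons -cats1.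
  by have := next_last U'; rewrite last_rcons.
left; exists p, q; by rewrite next_mid.
Qed.

Section Gen.
Variables (V D : finType) (tail : D -> V) (e n : D -> D) (C : seq V).
Hypothesis F : fullerene tail e n.
Hypothesis L : longest_cycle tail e C.
Local Notation adj := (adj tail e).

Lemma white_nbr u a b : u \in C -> a \notin C -> b \notin C -> adj u a -> adj u b -> a = b.
Proof.
move=> uC aC bC ua ub.
have nC : next C u \in C by rewrite mem_next.
have pC : prev C u \in C by rewrite mem_prev.
have := deg3 F ua (adj_next L uC) (adj_prev F L uC) ub.
have an : a != next C u by apply: contraNneq aC => ->.
have ap : a != prev C u by apply: contraNneq aC => ->.
move=> /(_ an ap (next_neq_prev L uC)) [->|E|E] //; by move: bC; rewrite E ?nC ?pC.
Qed.

Lemma third_nbr u a b c : u \in C -> a \notin C -> adj u a -> adj u b -> adj u c ->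
  a != b -> a != c -> b != c -> next C u = b \/ next C u = c.
Proof.
move=> uC aC ua ub uc ab ac bc.
have nC : next C u \in C by rewrite mem_next.
by case: (deg3 F ua ub uc (adj_next L uC) ab ac bc) => [E|->|->]; auto; move: aC; rewrite -E nC.
Qed.

Lemma two_nbrs u p q : u \in C -> adj u p -> adj u q -> p != q ->
  [\/ next C u = p, next C u = q | prev C u = p \/ prev C u = q].
Proof.
move=> uC up uq pq.
case: (next C u =P p) => [->|np]; first by apply: Or31.
case: (next C u =P q) => [->|nq]; first by apply: Or32.
apply: Or33; have := deg3 F up uq (adj_next L uC) (adj_prev F L uC).
have pn : p != next C u by apply/eqP=> E; apply: np.
have qn : q != next C u by apply/eqP=> E; apply: nq.
case/(_ pq pn qn) => [->|->|E]; auto.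
by move: (next_neq_prev L uC); rewrite E eqxx.
Qed.
End Gen.

Section Core.
Variables (V D : finType) (tail : D -> V) (e n : D -> D) (C : seq V) (d : D).
Hypothesis F : fullerene tail e n.
Hypothesis L : longest_cycle tail e C.
Local Notation fp := (fphi e n).
Local Notation hd x := (tail (e x)).
Local Notation adj := (adj tail e).
Local Notation x1 := (fp d).
Local Notation x2 := (fp x1).
Local Notation x3 := (fp x2).
Local Notation x4 := (fp x3).
Local Notation x5 := (fp x4).
Local Notation v1 := (tail d).
Local Notation v2 := (tail x1).
Local Notation v3 := (tail x2).
Local Notation v4 := (tail x3).
Local Notation v5 := (tail x4).
Local Notation v6 := (tail x5).
Hypothesis Hord : order fp d = 6.
Hypothesis Hwf : nwhite tail e n C d = 2.
Hypothesis H1 : dart_in_C tail e C x1.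
Hypothesis H4 : dart_in_C tail e C x4.

Lemma x6 : fp x5 = d.
Proof. by have := iter_order (fp_inj F) d; rewrite Hord. Qed.
Lemma orbd : orbit fp d = [:: d; x1; x2; x3; x4; x5].
Proof. by rewrite /orbit Hord. Qed.
Lemma hdE y : hd y = tail (fp y). Proof. by rewrite (tail_fp F). Qed.

Lemma inface y : fconnect fp d y ->
  [\/ y = d, y = x1 | y = x2] \/ [\/ y = x3, y = x4 | y = x5].
Proof.
rewrite fconnect_orbit orbd !inE.
case/orP=> [/eqP->|/orP[/eqP->|/orP[/eqP->|/orP[/eqP->|/orP[/eqP->|/eqP->]]]]].
- by left; apply: Or31.
- by left; apply: Or32.
- by left; apply: Or33.
- by right; apply: Or31.
- by right; apply: Or32.
- by right; apply: Or33.
Qed.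

Lemma blacks : [/\ v2 \in C, v3 \in C, v5 \in C & v6 \in C].
Proof.
move: H1 H4; rewrite /dart_in_C /cedge !hdE => /and3P[-> -> _] /and3P[-> -> _].
by [].
Qed.

Lemma whites : [/\ v1 \notin C, v4 \notin C & v1 != v4].
Proof.
have [b2 b3 b5 b6] := blacks.
set S := [set v | white C v & [exists y, fconnect fp d y && (tail y == v)]].
have sub : S \subset [set v1; v4].
  apply/subsetP => v; rewrite !inE => /andP[wv /existsP[y /andP[cy /eqP ty]]].
  move: wv; rewrite /white -ty.
  by case: (inface cy) => [[->|->|->]|[->|->|->]]; rewrite ?eqxx ?orbT //= ?b2 ?b3 ?b5 ?b6.
have cS : #|S| = 2 by [].
have le1 := subset_leq_card sub; rewrite cS cards2 in le1.
have v14 : v1 != v4 by move: le1; case: (v1 =P v4).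
have c2 : #|[set v1; v4]| = 2 by rewrite cards2 v14.
have E : S =i [set v1; v4] by apply/subset_cardP => //; rewrite cS c2.
have := E v1; have := E v4; rewrite !inE !eqxx ?orbT /= => /andP[w4 _] /andP[w1 _].
by split.
Qed.

Lemma adjs : [/\ adj v1 v2, adj v2 v3, adj v3 v4, adj v4 v5 & adj v5 v6 /\ adj v6 v1].
Proof.
have h y : adj (tail y) (tail (fp y)) by rewrite -hdE; apply: adjD.
by split; try split; try apply: h; rewrite -[in X in adj _ X]x6; apply: h.
Qed.

Lemma distinct : [/\ v2 != v3, v5 != v6, v3 != v5, v2 != v6 & (v2 != v5) && (v3 != v6)].
Proof.
have [a12 a23 a34 a45 [a56 a61]] := adjs.
have [b2 b3 b5 b6] := blacks; have [w1 w4 v14] := whites.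
have adjS u v : adj u v -> adj v u by rewrite (adj_sym F).
split.
- by rewrite eq_sym -hdE (noloop F).
- by rewrite eq_sym -hdE (noloop F).
- by rewrite eq_sym -hdE (hd_fp_tail F).
- by have := hd_fp_tail F x5; rewrite x6 hdE.
apply/andP; split; apply/negP => /eqP E.
- by move: v14; rewrite (white_nbr F L b2 w1 w4 (adjS _ _ a12)) ?eqxx // E adjS.
- by move: v14; rewrite (white_nbr F L b3 w4 w1 a34) ?eqxx // E.
Qed.

Hypothesis Hori : next C v2 = v3.

Lemma Rshape : exists P1 B1,
  let R := v2 :: v3 :: next C v3 :: P1 ++ v5 :: v6 :: B1 ++ [:: prev C v2] in
  [/\ uniq R, cycle adj R, size R = size C, (forall z, (z \in R) = (z \in C))
     & next R =1 next C /\ prev R =1 prev C].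
Proof.
have [a12 a23 a34 a45 [a56 a61]] := adjs.
have [b2 b3 b5 b6] := blacks; have [w1 w4 v14] := whites.
have [d23 d56 d35 d26 /andP[d25 d36]] := distinct.
have adjS u v : adj u v -> adj v u by rewrite (adj_sym F).
case: (rot_to b2) => i s Ri.
have U0 : uniq (v2 :: s) by rewrite -Ri rot_uniq (Cuniq L).
have c0 : cycle adj (v2 :: s) by rewrite -Ri rot_cycle (Ccyc L).
have s0 : size (v2 :: s) = size C by rewrite -Ri size_rot.
have m0 z : (z \in v2 :: s) = (z \in C) by rewrite -Ri mem_rot.
have n0 : next (v2 :: s) =1 next C by move=> z; rewrite -Ri (next_rot i (Cuniq L)).
have p0 : prev (v2 :: s) =1 prev C by move=> z; rewrite -Ri (prev_rot i (Cuniq L)).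
case: s Ri U0 c0 s0 m0 n0 p0 => [|y s'] Ri U0 c0 s0 m0 n0 p0.
  by move: (Csize L); rewrite -s0.
have yv3 : y = v3 by rewrite -Hori -n0 /= eqxx.
subst y.
have c56 : (next C v5 == v6) || (next C v6 == v5).
  by move: H4; rewrite /dart_in_C /cedge hdE => /and3P[_ _].
have nv5 : next C v5 = v6.
  case/orP: c56 => [/eqP //|/eqP nv6].
  have v6R : v6 \in v2 :: v3 :: s' by rewrite m0.
  case: (next_split U0 v6R) => [[p [q E]]|[p [E hn]]]; last first.
    by move: d25; rewrite -nv6 -n0 hn /= eqxx.
  rewrite n0 nv6 in E.
  case: p E => [|y [|y' A]] /= [] => [E|E1 E2|E1 E2 E3].
  - by move: d26; rewrite E eqxx.
  - by move: d36; rewrite E2 eqxx.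
  subst y y'; exfalso.
  by apply: (@orient _ _ _ _ _ C F L v1 v2 v3 v4 v5 v6 A q) => //; rewrite -E3 //.
have v5R : v5 \in v2 :: v3 :: s' by rewrite m0.
case: (next_split U0 v5R) => [[p [q E]]|[p [E hn]]]; last first.
  by move: d26; rewrite -nv5 -n0 hn /= eqxx.
rewrite n0 nv5 in E.
case: p E => [|y [|y' P0]] /= [] => [E|E1 E2|E1 E2 E3].
- by move: d25; rewrite E eqxx.
- by move: d35; rewrite E2 eqxx.
subst y y' s'.
clear v5R; case: P0 U0 c0 s0 m0 n0 p0 {Ri} => [|w P1] U0 c0 s0 m0 n0 p0.
  exfalso; apply: (Xlemma F L w4 b3 (adjS _ _ a34)).
  by rewrite -n0 (@next_mid _ [:: v2]) //.
have nv3 : next C v3 = w by rewrite -n0 (@next_mid _ [:: v2]).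
case/lastP: q U0 c0 s0 m0 n0 p0 => [|B1 w'] U0 c0 s0 m0 n0 p0.
  exfalso; apply: (Xlemma F L w1 b6 (adjS _ _ a61)).
  have l6 : last v2 (v3 :: (w :: P1) ++ [:: v5; v6]) = v6 by rewrite /= last_cat.
  by have := next_last U0; rewrite l6 n0 => ->.
have nw : next C w' = v2.
  have l6 : last v2 (v3 :: (w :: P1) ++ [:: v5, v6 & rcons B1 w']) = w'.
    by rewrite /= last_cat /= last_rcons.
  by have := next_last U0; rewrite l6 n0.
have pv2 : prev C v2 = w' by rewrite -nw (prev_next (Cuniq L)).
exists P1, B1; rewrite nv3 pv2.
rewrite -cats1 in U0 c0 s0 m0 n0 p0.
split; [exact: U0|exact: c0|exact: s0|exact: m0|split; [exact: n0|exact: p0]].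
Qed.

Lemma notface y : fconnect fp (e x1) y -> fconnect fp d y -> False.
Proof.
have [b2 b3 b5 b6] := blacks; have [w1 w4 v14] := whites.
have [d23 d56 d35 d26 /andP[d25 d36]] := distinct.
move=> c1 c2; have : fconnect fp d (e x1).
  by apply: connect_trans c2 _; rewrite (fconnect_sym (fp_inj F)).
have t1 : tail (e x1) = v3 by rewrite -hdE.
have h1 : hd (e x1) = v2 by rewrite (eK F).
case/inface => [[E|E|E]|[E|E|E]].
- by move: w1; rewrite -E t1 b3.
- by move: (noloop F x1); rewrite E eqxx.
- by move: w4; rewrite -hdE -E h1 b2.
- by move: w4; rewrite -E t1 b3.
- by move: d35; rewrite -E t1 eqxx.
- by move: d36; rewrite -E t1 eqxx.
Qed.

Lemma g_black : black_face tail e n C (e x1) && (order fp (e x1) == 6).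
Proof.
have [a12 a23 a34 a45 [a56 a61]] := adjs.
have [b2 b3 b5 b6] := blacks; have [w1 w4 v14] := whites.
have [d23 d56 d35 d26 /andP[d25 d36]] := distinct.
have adjS u v : adj u v -> adj v u by rewrite (adj_sym F).
have [P1 [B1 [RU Rc Rs Rm [Rn Rp]]]] := Rshape.
set w3 := next C v3 in RU Rc Rs Rm Rn Rp.
set w2 := prev C v2 in RU Rc Rs Rm Rn Rp.
have w3C : w3 \in C by rewrite mem_next.
have w2C : w2 \in C by rewrite mem_prev.
have pv3 : prev C v3 = v2 by rewrite -Hori (prev_next (Cuniq L)).
have nw2 : next C w2 = v2 by rewrite (next_prev (Cuniq L)).
have pw3 : prev C w3 = v3 by rewrite (prev_next (Cuniq L)).
have w23 : w2 != w3.
  move: RU => /= /and4P[_ _ /negP h _]; apply/eqP => E; apply: h.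
  by rewrite E mem_cat !inE mem_cat !inE eqxx !orbT.
have w3E : w3 = hd (n x2).
  have : adj (tail (e x1)) w3 by rewrite hdE; apply: adj_next.
  case/(nbr3 F) => E; last by rewrite E.
    by move: (next_neq_prev L b3); rewrite pv3 -/w3 E (eK F) eqxx.
  have E' : w3 = hd x2 := E.
  by move: w4; rewrite -hdE -E' w3C.
have w2E : w2 = hd (n x1).
  have : adj (tail (e d)) w2 by rewrite hdE; apply: (adj_prev F L).
  case/(nbr3 F) => E; last by rewrite E.
    by move: w1; rewrite -(eK F d) -E w2C.
  have E' : w2 = hd x1 := E.
  by move: (next_neq_prev L b2); rewrite Hori -/w2 E' -hdE eqxx.
have pw2 : prev C w2 = last v6 B1.
  have E : v2 :: v3 :: w3 :: P1 ++ v5 :: v6 :: B1 ++ [:: w2] =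
      (v2 :: v3 :: w3 :: P1 ++ v5 :: belast v6 B1) ++ [:: last v6 B1; w2].
    by rewrite /= -catA /= -[belast v6 B1 ++ _]cat_rcons -lastI.
  rewrite -Rp; have := RU; rewrite E => RU'.
  by have := prev_next RU' (last v6 B1); rewrite (next_mid RU').
have nw3 : exists a' P', P1 ++ [:: v5] = a' :: P' /\ next C w3 = a'.
  clear pw2; case: P1 RU Rc Rs Rm Rn Rp => [|p P1] RU Rc Rs Rm Rn Rp.
    by exists v5, [::]; rewrite -Rn (@next_mid _ [:: v2; v3]).
  by exists p, (P1 ++ [:: v5]); rewrite -Rn (@next_mid _ [:: v2; v3]).
set y0 := e x1.
have y1E : fp y0 = n x1 by rewrite /fphi /y0 (eK F).
have ty1 : tail (fp y0) = v2 by rewrite y1E (tailn F).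
have hy1 : hd (fp y0) = w2 by rewrite y1E w2E.
have ty2 : tail (fp (fp y0)) = w2 by rewrite (tail_fp F) hy1.
have ty0 : tail y0 = v3 by rewrite /y0 hdE.
have zf z : fp z = y0 -> tail z = w3 /\ hd z = v3.
  move=> fz; have ez : e z = n x2.
    have h : n (e z) = e x1 := fz.
    by rewrite -[x2]/(n (e x1)) -h !(n3 F).
  split; first by rewrite -{1}(eK F z) ez w3E.
  by rewrite ez (tailn F).
have itk := iter_order (fp_inj F) y0.
have ec y : fconnect fp y0 y -> y \in traject fp y0 (order fp y0).
  by rewrite fconnect_orbit.
have wa_ v : v \in C -> v \notin C -> False by move=> ->.
case/orP: (order_fp F y0) => /eqP ko; rewrite ko in itk ec.
-
  exfalso.
  set y2 := fp (fp y0) in ty2 itk.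
  set y3 := fp y2 in itk.
  have [tz hz] := zf _ itk.
  set a := hd y2.
  have ta : tail y3 = a by rewrite (tail_fp F).
  have wa : adj w2 a by rewrite -ty2; apply: adjD.
  have aw : adj a w3 by rewrite -ta -tz -hdE; apply: adjD.
  have a2 : a != v2 by rewrite -ty1 (hd_fp_tail F).
  have a3 : a != v3 by rewrite eq_sym -hz -ta (hd_fp_tail F).
  case aC: (a \in C).
  + case: (two_nbrs F L aC (adjS _ _ wa) aw w23) => [E|E|[E|E]].
    * apply: (PP F L RU Rc Rs Rm w1 w4 v14 a12 a61 a34 a45 (a := a)) => //.
      by rewrite -pw2 -E (prev_next (Cuniq L)).
    * by move: a3; rewrite -pw3 -E (prev_next (Cuniq L)) eqxx.
    * by move: a2; rewrite -nw2 -E (next_prev (Cuniq L)) eqxx.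
    * have [a' [P' [E1 E2]]] := nw3.
      apply: (PS F L RU Rc Rs Rm w1 w4 v14 a12 a61 a34 a45 E1).
      by rewrite -E2 -E (next_prev (Cuniq L)).
  + have a4 : a != v4.
      apply/eqP => E; apply: (Xlemma F L w4 b3 (adjS _ _ a34)).
      by rewrite -/w3 -E.
    have a1 : a != v1.
      apply/eqP => E; apply: (Xlemma F L w1 w2C).
        by rewrite -E; apply: adjS.
      by rewrite nw2.
    apply: (PW F L RU Rc Rs Rm w1 w4 a12 a61 a34 a45 _ _ wa aw).
      by rewrite aC.
    by rewrite /= !inE !negb_or a4 a1 (eq_sym v4) v14.
-
  set y2 := fp (fp y0) in ty2 itk ec.
  set y3 := fp y2 in itk ec.
  set y4 := fp y3 in itk ec.
  have [tz hz] := zf _ itk.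
  set b := hd y2.
  set a := hd y3.
  have tb : tail y3 = b by rewrite (tail_fp F).
  have ta : tail y4 = a by rewrite (tail_fp F).
  have wb : adj w2 b by rewrite -ty2; apply: adjD.
  have ba : adj b a by rewrite -tb; apply: adjD.
  have aw : adj a w3 by rewrite -ta -tz -hdE; apply: adjD.
  have b2' : b != v2 by rewrite -ty1 (hd_fp_tail F).
  have aw2 : a != w2 by rewrite -ty2 (hd_fp_tail F).
  have bw3 : b != w3 by rewrite eq_sym -tz -tb -hdE (hd_fp_tail F).
  have a3 : a != v3 by rewrite eq_sym -hz -ta (hd_fp_tail F).
  have ab : a != b by rewrite -tb (noloop F).
  have b1 : b \notin C -> b != v1.
    move=> bC; apply/eqP => E; apply: (Xlemma F L w1 w2C).
      by rewrite -E; apply: adjS.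
    by rewrite nw2.
  have a4 : a \notin C -> a != v4.
    move=> aC; apply/eqP => E; apply: (Xlemma F L w4 b3 (adjS _ _ a34)).
    by rewrite -/w3 -E.
  move: (RU) => /= /and4P[r2 r3 r4 r5].
  have w3v2 : w3 != v2 by apply: contraNneq r2 => <-; rewrite !inE eqxx orbT.
  have w2v3 : w2 != v3.
    by apply: contraNneq r3 => <-; rewrite inE mem_cat !inE mem_cat !inE eqxx !orbT.
  have w3v6 : w3 != v6 by apply: contraNneq r4 => ->; rewrite mem_cat !inE eqxx !orbT.
  have w2v5 : w2 != v5.
    move: r5; rewrite cat_uniq => /and3P[_ _ /= /andP[h _]].
    by apply: contraNneq h => <-; rewrite !inE mem_cat !inE eqxx !orbT.
  have nb4 : b = v4 -> [\/ a = v3, a = v5 | a = w2].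
    move=> E; apply: (deg3 F (adjS _ _ a34) a45).
    - by rewrite -E; apply: adjS.
    - by rewrite -E.
    - exact: d35.
    - by rewrite eq_sym.
    - by rewrite eq_sym.
  have nb1 : a = v1 -> [\/ b = v2, b = v6 | b = w3].
    move=> E; apply: (deg3 F a12 (adjS _ _ a61)).
    - by rewrite -E.
    - by rewrite -E; apply: adjS.
    - exact: d26.
    - by rewrite eq_sym.
    - by rewrite eq_sym.
  case aC: (a \in C); case bC: (b \in C).
  +
    rewrite ko eqxx andbT /black_face; apply/eqP/eq_card0 => v; rewrite !inE.
    apply/negP => /andP[wv /existsP[y /andP[cy /eqP ty]]].
    move: wv; rewrite /white -ty; move: (ec _ cy); rewrite /= !inE.
    by case/orP=> [/eqP->|/orP[/eqP->|/orP[/eqP->|/orP[/eqP->|/orP[/eqP->|/eqP->]]]]];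
      rewrite ?ty0 ?ty1 ?ty2 ?tb ?ta ?tz ?b3 ?b2 ?w2C ?bC ?aC ?w3C.
  +
    exfalso.
    have bv4 : b != v4.
      apply/eqP => E; case: (nb4 E) => E'; first by move: a3; rewrite E' eqxx.
        have y33 : y3 = x3.
          apply: (simple F); first by rewrite tb E.
          by rewrite -/a E' hdE.
        apply: (@notface y3); first by apply: (fconnect_iter fp 3 y0).
        by rewrite y33; apply: (fconnect_iter fp 3 d).
      by move: aw2; rewrite E' eqxx.
    have bw3' : w3 != b by rewrite eq_sym.
    case: (two_nbrs F L aC aw (adjS _ _ ba) bw3') => [E|E|[E|E]].
    * by move: a3; rewrite -pw3 -E (prev_next (Cuniq L)) eqxx.
    * by move: bC; rewrite -E mem_next aC.
    * have [a' [P' [E1 E2]]] := nw3.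
      have aa : a' = a by rewrite -E2 -E (next_prev (Cuniq L)).
      rewrite aa in E1.
      apply: (HWB F L RU Rc Rs Rm w1 w4 a12 a61 a34 a45 E1 _ _ wb ba).
        by rewrite bC.
      by rewrite /= !inE !negb_or bv4 b1 ?bC // (eq_sym v4) v14.
    * by move: bC; rewrite -E mem_prev aC.
  +
    exfalso.
    have av1 : a != v1.
      apply/eqP => E; case: (nb1 E) => E'.
      - by move: b2'; rewrite E' eqxx.
      - have y35 : y3 = x5.
          apply: (simple F); first by rewrite tb E'.
          by rewrite -/a E hdE x6.
        apply: (@notface y3); first by apply: (fconnect_iter fp 3 y0).
        by rewrite y35; apply: (fconnect_iter fp 5 d).
      - by move: bw3; rewrite E' eqxx.
    have aw2' : w2 != a by rewrite eq_sym.
    case: (two_nbrs F L bC (adjS _ _ wb) ba aw2') => [E|E|[E|E]].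
    * apply: (HBW F L RU Rc Rs Rm w1 w4 a12 a61 a34 a45 _ _ _ ba aw).
      - by rewrite -pw2 -E (prev_next (Cuniq L)).
      - by rewrite aC.
      - by rewrite /= !inE !negb_or a4 ?aC // av1 (eq_sym v4) v14.
    * by move: aC; rewrite -E mem_next bC.
    * by move: b2'; rewrite -nw2 -E (next_prev (Cuniq L)) eqxx.
    * by move: aC; rewrite -E mem_prev bC.
  +
    exfalso.
    have bv4 : b != v4.
      by apply/eqP => E; case: (nb4 E) => E'; move: aC; rewrite E' ?b3 ?b5 ?w2C.
    have av1 : a != v1.
      by apply/eqP => E; case: (nb1 E) => E'; move: bC; rewrite E' ?b2 ?b6 ?w3C.
    apply: (HWW F L RU Rc Rs Rm w1 w4 a12 a61 a34 a45 _ _ _ wb ba aw).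
    - by rewrite aC.
    - by rewrite bC.
    - by rewrite /= !inE !negb_or eq_sym ab bv4 b1 ?bC // a4 ?aC // av1 (eq_sym v4) v14.
Qed.
End Core.

Section Rev.
Variables (V D : finType) (tail : D -> V) (e n : D -> D) (C : seq V).
Hypothesis F : fullerene tail e n.
Hypothesis L : longest_cycle tail e C.
Local Notation adj := (adj tail e).

Lemma longest_rev : longest_cycle tail e (rev C).
Proof.
case: L => /and3P[U s c] M; split.
  rewrite /is_gcycle rev_uniq size_rev U s rev_cycle /=.
  by apply: sub_cycle c => x y; rewrite (adj_sym F).
by move=> c' /M; rewrite size_rev.
Qed.

Lemma nwhite_rev x : nwhite tail e n (rev C) x = nwhite tail e n C x.
Proof. by apply: eq_card => v; rewrite !inE /white mem_rev. Qed.

Lemma cedge_rev u v : cedge (rev C) u v = cedge C u v.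
Proof.
have U := Cuniq L.
rewrite /cedge !mem_rev !(next_rev U).
case uC: (u \in C); case vC: (v \in C) => //=.
have h x y : (prev C x == y) = (next C y == x).
  apply/eqP/eqP => [<-|<-]; by rewrite ?(next_prev U) ?(prev_next U).
by rewrite !h orbC.
Qed.

Lemma dart_in_C_rev x : dart_in_C tail e (rev C) x = dart_in_C tail e C x.
Proof. exact: cedge_rev. Qed.

Lemma black_face_rev x : black_face tail e n (rev C) x = black_face tail e n C x.
Proof. by rewrite /black_face nwhite_rev. Qed.
End Rev.

Section Side.
Variables (V D : finType) (tail : D -> V) (e n : D -> D) (C : seq V).
Hypothesis F : fullerene tail e n.
Hypothesis L : longest_cycle tail e C.
Local Notation fp := (fphi e n).
Local Notation hd x := (tail (e x)).
Local Notation adj := (adj tail e).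

Lemma cedge_sym u v : cedge C u v = cedge C v u.
Proof. by rewrite /cedge andbCA orbC. Qed.

Lemma third_cedge z : tail z \in C -> hd z \notin C ->
  cedge C (tail z) (hd (n z)) && cedge C (tail z) (hd (n (n z))).
Proof.
move=> uC zC; set u := tail z.
have U := Cuniq L.
have h12 : hd (n z) != hd (n (n z)) by rewrite eq_sym (hd_n F).
have h01 : hd z != hd (n z) by rewrite eq_sym (hd_n F).
have h02 : hd z != hd (n (n z)).
  apply/eqP => E; have E2 : z = n (n z) by apply: (simple F) => //; rewrite !(tailn F).
  by case/and3P: (n_uniq F z) => _; rewrite -E2 eqxx.
have a0 : adj u (hd z) by apply: adjD.
have a1 : adj u (hd (n z)) by rewrite /u -(tailn F z); apply: adjD.
have a2 : adj u (hd (n (n z))) by rewrite /u -(tailn F z) -(tailn F (n z)); apply: adjD.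
have nC : next C u \in C by rewrite mem_next.
have pC : prev C u \in C by rewrite mem_prev.
have nP := next_neq_prev L uC.
have hN : next C u = hd (n z) \/ next C u = hd (n (n z)) := third_nbr F L uC zC a0 a1 a2 h01 h02 h12.
have hP : prev C u = hd (n z) \/ prev C u = hd (n (n z)).
  have := deg3 F a0 a1 a2 (adj_prev F L uC) h01 h02 h12.
  by case=> [E|->|->]; auto; move: zC; rewrite -E pC.
have ce w : (next C u = w \/ prev C u = w) -> cedge C u w.
  rewrite /cedge uC; case=> <-; rewrite ?nC ?pC ?eqxx //=.
  by rewrite (next_prev U) eqxx orbT.
apply/andP; split; apply: ce; case: hN hP => [E|E] [E'|E']; auto;
  by move: nP; rewrite E E' eqxx.
Qed.

Lemma nwhite_same x y : fconnect fp x y -> nwhite tail e n C y = nwhite tail e n C x.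
Proof.
move=> cxy; apply: eq_card => v; rewrite !inE.
congr (_ && _); apply/existsP/existsP => [] [z /andP[c t]]; exists z; rewrite t andbT.
- by apply: connect_trans cxy c.
- rewrite (same_connect (fconnect_sym (fp_inj F)) cxy) in c; done.
Qed.

Lemma order_same x y : fconnect fp x y -> order fp y = order fp x.
Proof.
move=> cxy; apply: eq_card => z.
by rewrite -!topredE /= (same_connect (fconnect_sym (fp_inj F)) cxy).
Qed.

Variable d : D.
Local Notation x1 := (fp d).
Local Notation x2 := (fp x1).
Local Notation x3 := (fp x2).
Local Notation x4 := (fp x3).
Local Notation x5 := (fp x4).
Hypothesis Hord : order fp d = 6.
Hypothesis Hwf : nwhite tail e n C d = 2.
Hypothesis H1 : dart_in_C tail e C x1.
Hypothesis H4 : dart_in_C tail e C x4.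

Lemma g_black_any : black_face tail e n C (e x1) && (order fp (e x1) == 6).
Proof.
have U := Cuniq L.
have := H1; rewrite /dart_in_C /cedge -(tail_fp F x1) => /and3P[b2 b3 /orP[/eqP Ho|/eqP Ho]].
  exact: g_black F L Hord Hwf H1 H4 Ho.
have Ho' : next (rev C) (tail x1) = tail x2.
  by rewrite (next_rev U) -Ho (prev_next U).
have := g_black F (longest_rev F L) Hord _ _ _ Ho'.
rewrite black_face_rev; apply; by rewrite ?nwhite_rev ?dart_in_C_rev.
Qed.

Lemma side : ruleA tail e n C (e x1) = (1 / 2)%R /\ ruleB tail e n C (e x1) = 0%R.
Proof.
have [b2 b3 b5 b6] := blacks F H1 H4; have [w1 w4 v14] := whites F Hord Hwf H1 H4.
case/andP: g_black_any => bf o6.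
have cE : dart_in_C tail e C (fp (e x1)).
  rewrite /dart_in_C /fphi (eK F).
  have h : tail (e d) \in C by rewrite (tail_fp F) in b2.
  have h' : hd (e d) \notin C by rewrite (eK F).
  by case/andP: (third_cedge h h') => _; rewrite !(tailn F).
split; last by rewrite /ruleB cE !andbF.
rewrite /ruleA bf (eqP o6) /=.
have wf : white_face tail e n C (e (e x1)).
  by rewrite (eK F) /white_face (nwhite_same (fconnect1 _ _)) Hwf.
have c1 : dart_in_C tail e C (e x1).
  by rewrite /dart_in_C (eK F) cedge_sym.
have cF : dart_in_C tail e C (finv fp (e x1)).
  rewrite /finv (eqP o6) /=.
  set z := fp (fp (fp (fp (fp (e x1))))).
  have fz : fp z = e x1.
    by have := iter_order (fp_inj F) (e x1); rewrite (eqP o6).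
  have ez : e z = n x2.
    have h : n (e z) = e x1 := fz.
    by rewrite -[x2]/(n (e x1)) -h !(n3 F).
  rewrite /dart_in_C -{1}(eK F z) ez (tailn F) cedge_sym.
  have h' : hd x2 \notin C by rewrite -(tail_fp F x2).
  by case/andP: (third_cedge b3 h').
by rewrite wf c1 cF cE.
Qed.
End Side.

Unset Implicit Arguments.
Set Strict Implicit.

Theorem lemma3 (V D : finType) (tail : D -> V) (e n : D -> D) (C : seq V)
  (d : D) :
  fullerene tail e n ->
  longest_cycle tail e C ->
  order (fphi e n) d = 6 ->
  white_face tail e n C d ->
  dart_in_C tail e C (fphi e n d) ->
  dart_in_C tail e C (iter 4 (fphi e n) d) ->
  final_charge tail e n C d = 1%R.
Proof.
move=> F L Hord /eqP Hwf H1 H4; rewrite /= in H4.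
have [b2 b3 b5 b6] := blacks F H1 H4; have [w1 w4 v14] := whites F Hord Hwf H1 H4.
have x6 := x6 F Hord.
have [sA sB] := side F L Hord Hwf H1 H4.
have c3 : fconnect (fphi e n) d ((fphi e n) ((fphi e n) ((fphi e n) d))) by apply: (fconnect_iter (fphi e n) 3 d).
have Hord' : order (fphi e n) ((fphi e n) ((fphi e n) ((fphi e n) d))) = 6 by rewrite (order_same F c3).
have Hwf' : nwhite tail e n C ((fphi e n) ((fphi e n) ((fphi e n) d))) = 2 by rewrite (nwhite_same C F c3).
have H4' : dart_in_C tail e C ((fphi e n) ((fphi e n) ((fphi e n) ((fphi e n) ((fphi e n) ((fphi e n) ((fphi e n) d))))))) by rewrite x6.
have [sA' sB'] := side F L Hord' Hwf' H4 H4'.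
have t0 y : fconnect (fphi e n) d y -> transfer tail e n C y = 0%R.
  move=> cy; rewrite /transfer /ruleA /ruleB /black_face (nwhite_same C F cy) Hwf /=.
  by rewrite GRing.addr0.
have te y : ~~ dart_in_C tail e C y -> transfer tail e n C (e y) = 0%R.
  have de : dart_in_C tail e C (e y) = dart_in_C tail e C y.
    by rewrite /dart_in_C (eK F) cedge_sym.
  move=> h; rewrite /transfer /ruleA /ruleB de (negbTE h) !andbF /=.
  by rewrite GRing.addr0.
have nd z : tail z \notin C -> ~~ dart_in_C tail e C z.
  by move=> h; rewrite /dart_in_C /cedge (negbTE h).
have nd' z : tail (e z) \notin C -> ~~ dart_in_C tail e C z.
  by move=> h; rewrite /dart_in_C /cedge (negbTE h) andbF.
rewrite /final_charge Hwf.
rewrite (eq_bigl (fun y => y \in orbit (fphi e n) d)); last by move=> y; rewrite fconnect_orbit.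
rewrite -big_uniq ?orbit_uniq // (orbd Hord) !big_cons big_nil.
have k0 : fconnect (fphi e n) d d := connect0 _ _.
have k1 : fconnect (fphi e n) d (fphi e n d) := fconnect_iter _ 1 d.
have k2 : fconnect (fphi e n) d (fphi e n (fphi e n d)) := fconnect_iter _ 2 d.
have k3 : fconnect (fphi e n) d (fphi e n (fphi e n (fphi e n d))) := fconnect_iter _ 3 d.
have k4 : fconnect (fphi e n) d (fphi e n (fphi e n (fphi e n (fphi e n d)))) := fconnect_iter _ 4 d.
have k5 : fconnect (fphi e n) d (fphi e n (fphi e n (fphi e n (fphi e n (fphi e n d))))) := fconnect_iter _ 5 d.
rewrite (t0 _ k0) (t0 _ k1) (t0 _ k2) (t0 _ k3) (t0 _ k4) (t0 _ k5).
rewrite (te d (nd _ w1)).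
have w4' : tail (e (fphi e n (fphi e n d))) \notin C by rewrite -(tail_fp F).
rewrite (te _ (nd' _ w4')) (te _ (nd _ w4)).
have w1' : tail (e (fphi e n (fphi e n (fphi e n (fphi e n (fphi e n d)))))) \notin C.
  by rewrite -(tail_fp F) x6.
rewrite (te _ (nd' _ w1')).
rewrite /transfer sA sB sA' sB'.
by apply/eqP; vm_compute.
Qed.
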